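(* Let $n\ge4$ and let $\textnormal{Reg}(\mathcal{OCT}_n)$ be the set of regular elements of $\mathcal{OCT}_n$. Then the rank of the semigroup $\textnormal{Reg}(\mathcal{OCT}_n)$ is $3$.
   Context: $\mathcal{T}_n$ is the full transformation semigroup on $[n]=\{1,\dots,n\}$ under composition. $\alpha$ is a contraction if $|x\alpha-y\alpha|\le|x-y|$ for all $x,y$, order-preserving if $x\le y\Rightarrow x\alpha\le y\alpha$. $\mathcal{OCT}_n$ is the semigroup of order-preserving contractions; $\alpha\in\mathcal{OCT}_n$ is regular if $\alpha\beta\alpha=\alpha$ for some $\beta\in\mathcal{OCT}_n$; these form a subsemigroup. The rank of a semigroup is the minimum cardinality of a generating set. *)

(* Defs.v *)
From mathcomp Require Import all_boot all_order all_algebra.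
Set Implicit Arguments. Unset Strict Implicit. Unset Printing Implicit Defensive.

(* [n] = {1..n} is represented by 'I_n = {0..n-1} (a translation by 1, which
   preserves order and distances). *)
Definition transf (n : nat) := {ffun 'I_n -> 'I_n}.

(* Composition written on the right, as in the paper: x (a b) = (x a) b. *)
Definition tcomp n (a b : transf n) : transf n := [ffun x => b (a x)].

Definition ndist (x y : nat) : nat := `|(x%:Z - y%:Z)%R|%N.

Definition is_contraction n (a : transf n) : bool :=
  [forall x : 'I_n, forall y : 'I_n, ndist (a x) (a y) <= ndist x y].

Definition is_order_preserving n (a : transf n) : bool :=
  [forall x : 'I_n, forall y : 'I_n, (x <= y) ==> (a x <= a y)].

Definition OCT n : {set transf n} :=
  [set a | is_order_preserving a && is_contraction a].

Definition RegOCT n : {set transf n} :=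
  [set a in OCT n | [exists b in OCT n, tcomp (tcomp a b) a == a]].

Definition in_generated n (A : {set transf n}) (x : transf n) : Prop :=
  exists (a : transf n) (s : seq (transf n)),
    a \in A /\ all (fun y => y \in A) s /\ foldl (@tcomp n) a s = x.

Definition generates n (A S : {set transf n}) : Prop :=
  A \subset S /\ forall x, x \in S -> in_generated A x.

Definition semigroup_rank_is n (S : {set transf n}) (r : nat) : Prop :=
  (exists A : {set transf n}, generates A S /\ #|A| = r) /\
  (forall A : {set transf n}, generates A S -> r <= #|A|).

(* Main.v *)
Require Import Defs.
From mathcomp Require Import all_boot all_order all_algebra zify.

Section Nat.
Variables (n : nat) (f g : nat -> nat).
Hypothesis Hf : forall i j, i <= j -> j <= n -> f i <= f j /\ f j <= f i + (j - i).
Hypothesis Hg : forall i j, i <= j -> j <= n -> g i <= g j /\ g j <= g i + (j - i).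
Hypothesis fle : forall i, i <= n -> f i <= n.
Hypothesis gle : forall i, i <= n -> g i <= n.
Hypothesis Hreg : forall i, i <= n -> f (g (f i)) = f i.

Lemma ivt d : forall i t, i + d <= n -> f i <= t <= f (i + d) ->
  exists k, k <= n /\ f k = t.
Proof.
elim: d => [|d IH] i t hn /andP [h1 h2].
  exists i; split; [lia | rewrite addn0 in h2; lia].
case: (leqP t (f (i + d))) => ht.
  apply: (IH i t); [lia | by rewrite h1 ht].
exists (i + d.+1); split; first lia.
have := Hf (i + d) (i + d.+1) ltac:(lia) hn.
rewrite addnS in h2 *. lia.
Qed.

Lemma key j : j < n -> f j = f j.+1 -> f 0 < f j -> f j < f n -> False.
Proof.
move=> jn hfl h0 hn.
have [v0 [hv0 fv0]] : exists k, k <= n /\ f k = (f j).-1.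
  apply: (ivt j 0 (f j).-1); first lia. rewrite add0n; apply/andP; split; lia.
have [w0 [hw0 fw0]] : exists k, k <= n /\ f k = (f j).+1.
  apply: (ivt (n - j.+1) j.+1 (f j).+1); first lia.
  rewrite subnKC //; apply/andP; split; lia.
set v := g (f v0). set u := g (f j). set w := g (f w0).
have fv : f v = (f j).-1 by rewrite /v Hreg // fv0.
have fu : f u = f j by rewrite /u Hreg //; lia.
have fw : f w = (f j).+1 by rewrite /w Hreg // fw0.
have fjn : f j <= n by apply: fle; lia.
have fw0n : f w0 <= n by apply: fle.
have [g1 g2] := Hg (f v0) (f j) ltac:(lia) fjn.
have [g3 g4] := Hg (f j) (f w0) ltac:(lia) fw0n.
have vn : v <= n by apply: gle; apply: fle.
have un : u <= n by apply: gle.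
have wn : w <= n by apply: gle.
rewrite -/v -/u in g1 g2. rewrite -/u -/w in g3 g4.
have hvu : v < u.
  rewrite ltnNge; apply/negP => h; have := (Hf u v h vn).1; lia.
have huw : u < w.
  rewrite ltnNge; apply/negP => h; have := (Hf w u h un).1; lia.
have e1 : v = u.-1 by lia.
have e2 : w = u.+1 by lia.
case: (leqP u j) => huj.
  have := (Hf w j.+1 ltac:(lia) ltac:(lia)).1; lia.
have := (Hf j v ltac:(lia) vn).1; lia.
Qed.

End Nat.

Section Form.
Variables (n : nat) (f : nat -> nat).
Hypothesis Hf : forall i j, i <= j -> j <= n -> f i <= f j /\ f j <= f i + (j - i).
Hypothesis flat : forall j, j < n -> f j = f j.+1 -> f j = f 0 \/ f j = f n.

Lemma form : exists p, forall i, i <= n -> f i = f 0 + minn (i - p) (f n - f 0).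
Proof.
have exP : exists i, (i <= n) && (f i == f 0) by exists 0; rewrite leq0n eqxx.
have ubP : forall i, (i <= n) && (f i == f 0) -> i <= n by move=> i /andP[].
case: (ex_maxnP exP ubP) => p /andP [pn /eqP fp] pmax.
exists p.
have Hn := Hf 0 n (leq0n _) (leqnn _).
have low : forall i, i <= p -> f i = f 0.
  move=> i ip; have := (Hf i p ip pn).1; have := (Hf 0 i (leq0n _) ltac:(lia)).1; lia.
have high : forall d, p + d <= n -> f (p + d) = f 0 + minn d (f n - f 0).
  elim=> [|d IH] hd; first by rewrite addn0 fp; lia.
  have IH' := IH ltac:(lia).
  have [s1 s2] := Hf (p + d) (p + d.+1) ltac:(lia) hd.
  have hfn := (Hf (p + d.+1) n hd (leqnn _)).1.
  case: (ltngtP (f (p + d)) (f (p + d.+1))) => c; try lia.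
  have := flat (p + d) ltac:(lia) ltac:(by rewrite -addnS).
  case=> c2.
    have := pmax (p + d.+1); rewrite hd -c c2 eqxx /= => /(_ isT); lia.
  lia.
move=> i hi; case: (leqP i p) => ip.
  rewrite low //; lia.
have := high (i - p) ltac:(lia). rewrite subnKC; [done | lia].
Qed.
End Form.

Lemma ndistE {x y : nat} : x <= y -> ndist x y = y - x.
Proof. rewrite /ndist. lia. Qed.
Lemma ndistC (x y : nat) : ndist x y = ndist y x.
Proof. rewrite /ndist. lia. Qed.

Lemma octP n (a : transf n) : reflect
  (forall x y : 'I_n, x <= y -> a x <= a y /\ a y <= a x + (y - x)) (a \in OCT n).
Proof.
rewrite inE; apply: (iffP andP).
  move=> [/forallP Hop /forallP Hc] x y xy.
  have h1 := implyP (forallP (Hop x) y) xy.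
  split=> //.
  have := forallP (Hc x) y. rewrite (ndistE h1) (ndistE xy). lia.
move=> H; split; apply/forallP=> x; apply/forallP=> y.
  by apply/implyP=> xy; case: (H x y xy).
case: (leqP x y) => xy.
  case: (H x y xy) => h1 h2. rewrite (ndistE h1) (ndistE xy). lia.
have yx := ltnW xy.
case: (H y x yx) => h1 h2. rewrite ndistC (ndistE h1) ndistC (ndistE yx). lia.
Qed.

Lemma tcompE n (a b : transf n) x : tcomp a b x = b (a x).
Proof. by rewrite /tcomp ffunE. Qed.

Lemma tcompA n (a b c : transf n) : tcomp (tcomp a b) c = tcomp a (tcomp b c).
Proof. by apply/ffunP=> x; rewrite !tcompE. Qed.

Section S.
Variable n : nat.
Notation T := (transf n.+1).

Definition idf : T := [ffun x => x].
Definition sl : T := [ffun x : 'I_n.+1 => inord (x.-1)].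
Definition sr : T := [ffun x : 'I_n.+1 => inord (minn x.+1 n)].

Lemma idfE x : idf x = x. Proof. by rewrite ffunE. Qed.
Lemma slE (x : 'I_n.+1) : nat_of_ord (sl x) = x.-1.
Proof. rewrite ffunE inordK //. have := ltn_ord x. lia. Qed.
Lemma srE (x : 'I_n.+1) : nat_of_ord (sr x) = minn x.+1 n.
Proof. rewrite ffunE inordK //. lia. Qed.

Lemma idf_oct : idf \in OCT n.+1.
Proof. apply/octP=> x y xy; rewrite !idfE; lia. Qed.
Lemma sl_oct : sl \in OCT n.+1.
Proof. apply/octP=> x y xy; rewrite !slE; lia. Qed.
Lemma sr_oct : sr \in OCT n.+1.
Proof. apply/octP=> x y xy; rewrite !srE; lia. Qed.

Lemma idf_reg : idf \in RegOCT n.+1.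
Proof.
rewrite inE idf_oct /=; apply/existsP; exists idf; rewrite idf_oct /=.
by apply/eqP/ffunP=> x; rewrite !tcompE !idfE.
Qed.
Lemma sl_reg : sl \in RegOCT n.+1.
Proof.
rewrite inE sl_oct /=; apply/existsP; exists sr; rewrite sr_oct /=.
apply/eqP/ffunP=> x; rewrite !tcompE; apply/val_inj => /=.
rewrite !slE srE slE. have := ltn_ord x. lia.
Qed.
Lemma sr_reg : sr \in RegOCT n.+1.
Proof.
rewrite inE sr_oct /=; apply/existsP; exists sl; rewrite sl_oct /=.
apply/eqP/ffunP=> x; rewrite !tcompE; apply/val_inj => /=.
rewrite !srE slE srE. have := ltn_ord x. lia.
Qed.


Definition fn (a : T) i := nat_of_ord (a (inord i)).
Lemma fn_le a i : fn a i <= n.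
Proof. by rewrite /fn -ltnS ltn_ord. Qed.
Lemma fn_val a (x : 'I_n.+1) : fn a x = a x.
Proof. by rewrite /fn inord_val. Qed.
Lemma fn_oct {a : T} : a \in OCT n.+1 -> forall i j, i <= j -> j <= n ->
  fn a i <= fn a j /\ fn a j <= fn a i + (j - i).
Proof.
move=> /octP H i j ij jn.
have := H (inord i) (inord j); rewrite !inordK; try lia.
by move=> /(_ ij).
Qed.

Lemma reg_flat a : a \in RegOCT n.+1 -> forall j, j < n -> fn a j = fn a j.+1 ->
  fn a j = fn a 0 \/ fn a j = fn a n.
Proof.
rewrite inE => /andP [ha /existsP [b /andP [hb /eqP e]]] j jn hfl.
have Hreg : forall i, i <= n -> fn a (fn b (fn a i)) = fn a i.
  move=> i _; rewrite /fn !inord_val.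
  by have := congr1 (fun h : T => nat_of_ord (h (inord i))) e; rewrite /= !tcompE.
have Ha := fn_oct ha. have Hb := fn_oct hb.
have [h1 _] := Ha 0 j (leq0n _) (ltnW jn).
have [h2 _] := Ha j n (ltnW jn) (leqnn _).
case: (ltngtP (fn a 0) (fn a j)) => c1; try lia.
case: (ltngtP (fn a j) (fn a n)) => c2; try lia.
exfalso; exact: (@key n (fn a) (fn b) Ha Hb (fun i (_ : i <= n) => fn_le a i) (fun i (_ : i <= n) => fn_le b i) Hreg j jn hfl c1 c2).
Qed.

Lemma fold_sl k : forall h x, nat_of_ord (foldl (@tcomp _) h (nseq k sl) x) = h x - k.
Proof.
elim: k => [|k IH] h x /=; first by rewrite subn0.
by rewrite IH tcompE slE; lia.
Qed.
Lemma fold_sr k : forall h x, nat_of_ord (foldl (@tcomp _) h (nseq k sr) x) = minn (h x + k) n.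
Proof.
elim: k => [|k IH] h x /=.
  rewrite addn0; have := ltn_ord (h x); lia.
by rewrite IH tcompE srE; have := ltn_ord (h x); lia.
Qed.

Lemma reg_gen a : a \in RegOCT n.+1 ->
  exists s, all (fun y => y \in [set idf; sl; sr]) s /\ foldl (@tcomp _) idf s = a.
Proof.
move=> hr.
have ha : a \in OCT n.+1 by move: hr; rewrite inE => /andP[].
have [p Hp] := @form n (fn a) (fn_oct ha) (@reg_flat a hr).
set L := fn a 0. set m := fn a n - L.
have [h0 _] := fn_oct ha 0 n (leq0n n) (leqnn n).
have fnn := fn_le a n.
exists (nseq p sl ++ nseq (n - m) sr ++ nseq (n - m - L) sl); split.
  by rewrite !all_cat !all_nseq !inE !eqxx !orbT.
apply/ffunP => x; apply/val_inj.
rewrite !foldl_cat /= fold_sl fold_sr fold_sl idfE -fn_val Hp; last by have := ltn_ord x; lia.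
rewrite -/L -/m. lia.
Qed.

Lemma gen_ind (A : {set T}) (C : T -> Prop) :
  (forall u v, C u -> C v -> C (tcomp u v)) -> (forall x, x \in A -> C x) ->
  forall x, in_generated A x -> C x.
Proof.
move=> Hc HA x [a0 [s [ha [hs <-]]]].
have : C a0 by apply: HA.
elim: s a0 {ha} hs => [|y s IH] a0 //= /andP [hy hs] h.
by apply: IH => //; apply: Hc => //; apply: HA.
Qed.

Lemma id_in (A : {set T}) : generates A (RegOCT n.+1) -> idf \in A.
Proof.
move=> [sub gen].
have [a0 [s [ha [hs e]]]] := gen idf idf_reg.
move: hs e; case/lastP: s => [|s v]; first by move=> _ /= <-.
rewrite all_rcons foldl_rcons => /andP [hv _] e.
have vo : v \in OCT n.+1.
  by move: (subsetP sub v hv); rewrite inE => /andP[].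
set w := foldl _ _ _ in e.
have surj : forall y : 'I_n.+1, exists x, v x = y.
  move=> y; exists (w y); by have := congr1 (fun h : T => h y) e; rewrite tcompE idfE.
have Hv := fn_oct vo.
have [x0 hx0] := surj ord0. have [x1 hx1] := surj ord_max.
have v0 : fn v 0 = 0.
  have := (Hv 0 x0 (leq0n _) ltac:(have := ltn_ord x0; lia)).1.
  by rewrite fn_val hx0 /=; lia.
have vn : fn v n = n.
  have := (Hv x1 n ltac:(have := ltn_ord x1; lia) (leqnn _)).1.
  rewrite fn_val hx1 /= => h; have := fn_le v n; lia.
suff e2 : v = idf by rewrite -e2.
apply/ffunP => x; apply/val_inj; rewrite /= idfE -(fn_val v x).
have xn : x <= n by have := ltn_ord x; lia.
have := (Hv 0 x (leq0n _) xn).2. have := (Hv x n xn (leqnn _)).2. lia.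
Qed.

Lemma tcomp1f (u : T) : tcomp idf u = u.
Proof. by apply/ffunP => x; rewrite tcompE idfE. Qed.
Lemma tcompf1 (u : T) : tcomp u idf = u.
Proof. by apply/ffunP => x; rewrite tcompE idfE. Qed.

Lemma lower (A : {set T}) : 0 < n -> generates A (RegOCT n.+1) -> 3 <= #|A|.
Proof.
move=> n0 G.
have hid := @id_in A G.
rewrite leqNgt; apply/negP => hA.
have comm : forall x y, x \in A -> y \in A -> tcomp x y = tcomp y x.
  move=> x y hx hy.
  case: (eqVneq x idf) => [->|nx]; first by rewrite tcomp1f tcompf1.
  case: (eqVneq y idf) => [->|ny]; first by rewrite tcomp1f tcompf1.
  case: (eqVneq x y) => [->//|nxy].
  have : #|[set idf; x; y]| <= #|A|.
    apply: subset_leq_card; apply/subsetP => z; rewrite !inE.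
    by move=> /orP [/orP [] | ] /eqP ->.
  rewrite setUC cardsU1 cards2 !inE (negbTE ny) eq_sym (negbTE nxy) eq_sym nx /=. move=> h; by have := leq_ltn_trans h hA.
case: G => [sub gen].
have C1 : forall z, in_generated A z -> forall y, y \in A -> tcomp z y = tcomp y z.
  apply: gen_ind.
    move=> u v hu hv y hy.
    by rewrite tcompA hv // -tcompA hu // tcompA.
  by move=> x hx y hy; apply: comm.
have C2 : forall z, in_generated A z -> tcomp z sl = tcomp sl z.
  apply: gen_ind.
    move=> u v hu hv.
    by rewrite tcompA hv // -tcompA hu // tcompA.
  by move=> x hx; rewrite (C1 sl (gen _ sl_reg) x hx).
move: (C2 sr (gen _ sr_reg)) => /ffunP /(_ ord0); rewrite !tcompE => /(congr1 val) /=.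
have := slE (sr ord0); have := srE (@ord0 n); have := slE (@ord0 n); have := srE (sl ord0); rewrite /=; lia.
Qed.

Lemma upper : 0 < n -> generates [set idf; sl; sr] (RegOCT n.+1) /\ #|[set idf; sl; sr]| = 3.
Proof.
move=> n0; split; first split.
- apply/subsetP => z hz; rewrite !inE in hz; move: hz => /orP [/orP [] | ] /eqP ->; [exact: idf_reg | exact: sl_reg | exact: sr_reg].
- move=> x hx; have [s [hs e]] := @reg_gen x hx.
  by exists idf, s; split; [rewrite !inE eqxx | split].
have d1 : idf != sl.
  apply/negP => /eqP /(congr1 (fun h : T => nat_of_ord (h (inord 1)))).
  rewrite /= idfE slE inordK //=; lia.
have d2 : idf != sr.
  apply/negP => /eqP /(congr1 (fun h : T => nat_of_ord (h ord0))).
  rewrite /= idfE srE /=; lia.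
have d3 : sl != sr.
  apply/negP => /eqP /(congr1 (fun h : T => nat_of_ord (h ord0))).
  rewrite /= slE srE /=; lia.
move: d2 d3; rewrite eq_sym (eq_sym sl) => /negbTE d2 /negbTE d3.
by rewrite setUC cardsU1 cards2 !inE d1 d2 d3.
Qed.

End S.

Theorem corollary13 (n : nat) : 4 <= n -> semigroup_rank_is (RegOCT n) 3.
Proof.
case: n => // n hn.
have n0 : 0 < n by lia.
split.
  by exists [set idf n; sl n; sr n]; apply: upper.
by move=> A; apply: lower.
Qed.
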